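(* Let $G\le\mathrm{Aff}(n)$ be a subgroup acting transitively on $\mathbb{R}^n$. Then the centraliser of $G$ in $\mathrm{Aff}(n)$ is a connected unipotent group of dimension at most $n$.
   Context: $\mathrm{Aff}(n)$ is the affine group of $\mathbb{R}^n$, identified with matrices $\begin{pmatrix} g&t\\0&1\end{pmatrix}\in GL(n+1,\mathbb{R})$; a subgroup is unipotent if all its elements are unipotent matrices. *)

(* Defs.v *)
From HB Require Import structures.
From Stdlib Require Import Reals Lra.
From Stdlib Require Import ClassicalEpsilon FunctionalExtensionality.
From mathcomp Require Import all_boot all_order all_algebra.

Set Implicit Arguments.
Unset Strict Implicit.
Unset Printing Implicit Defensive.

Definition Req_bool (x y : R) : bool := if Req_EM_T x y then true else false.

Lemma Req_boolP : Equality.axiom Req_bool.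
Proof. move=> x y; rewrite /Req_bool; destruct (Req_EM_T x y) as [h|h]; by constructor. Qed.

HB.instance Definition _ := hasDecEq.Build R Req_boolP.

Definition R_find (P : pred R) (_ : nat) : option R :=
  match excluded_middle_informative (exists x, P x) with
  | left h => Some (proj1_sig (constructive_indefinite_description _ h))
  | right _ => None
  end.

Lemma R_find_correct P n x : R_find P n = Some x -> P x.
Proof.
rewrite /R_find; case: excluded_middle_informative => // h [<-].
exact: proj2_sig (constructive_indefinite_description _ h).
Qed.

Lemma R_find_complete (P : pred R) : (exists x, P x) -> exists n, R_find P n.
Proof.
move=> h; exists 0%N; rewrite /R_find; case: excluded_middle_informative => //.
Qed.

Lemma R_find_ext (P Q : pred R) : P =1 Q -> R_find P =1 R_find Q.
Proof.
move=> e; have -> : P = Q by apply: functional_extensionality.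
by [].
Qed.

HB.instance Definition _ := hasChoice.Build R R_find_correct R_find_complete R_find_ext.

Lemma R_addrA : forall x y z : R, Rplus x (Rplus y z) = Rplus (Rplus x y) z. Proof. move=> x y z; lra. Qed.
Lemma R_addrC : forall x y : R, Rplus x y = Rplus y x. Proof. move=> x y; lra. Qed.
Lemma R_add0r : forall x : R, Rplus R0 x = x. Proof. move=> x; lra. Qed.
Lemma R_addNr : forall x : R, Rplus (Ropp x) x = R0. Proof. move=> x; lra. Qed.

HB.instance Definition _ := GRing.isZmodule.Build R R_addrA R_addrC R_add0r R_addNr.

Lemma R_mulrA : forall x y z : R, Rmult x (Rmult y z) = Rmult (Rmult x y) z. Proof. move=> x y z; ring. Qed.
Lemma R_mulrC : forall x y : R, Rmult x y = Rmult y x. Proof. move=> x y; ring. Qed.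
Lemma R_mul1r : forall x : R, Rmult R1 x = x. Proof. move=> x; ring. Qed.
Lemma R_mulrDl : forall x y z : R, Rmult (Rplus x y) z = Rplus (Rmult x z) (Rmult y z). Proof. move=> x y z; ring. Qed.
Lemma R_one_neq0 : R1 != (R0 : R).
Proof. apply/eqP; exact: R1_neq_R0. Qed.

HB.instance Definition _ :=
  GRing.Zmodule_isComNzRing.Build R R_mulrA R_mulrC R_mul1r R_mulrDl R_one_neq0.

Definition R_inv (x : R) : R := if Req_EM_T x R0 then R0 else Rinv x.

Lemma R_mulVf (x : R) : x != R0 -> Rmult (R_inv x) x = R1.
Proof.
move=> h; rewrite /R_inv; destruct (Req_EM_T x R0) as [e|ne].
  by exfalso; subst x; move: h; rewrite eqxx.
by apply: Rinv_l; apply/eqP.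
Qed.

Lemma R_inv0 : R_inv R0 = R0.
Proof. by rewrite /R_inv; destruct (Req_EM_T R0 R0). Qed.

HB.instance Definition _ := GRing.ComNzRing_isField.Build R R_mulVf R_inv0.

Local Open Scope ring_scope.

Definition Aff (n : nat) (M : 'M[R]_(n + 1)) : Prop :=
  exists (g : 'M[R]_n) (t : 'cV[R]_n),
    g \in unitmx /\ M = block_mx g t (0 : 'M[R]_(1, n)) (1%:M : 'M[R]_1).

(* The action of an element of Aff(n) on R^n: x |-> g x + t,
   i.e. the homogeneous vector (x;1) is sent to M (x;1). *)
Definition hom (n : nat) (x : 'cV[R]_n) : 'cV[R]_(n + 1) :=
  col_mx x (1%:M : 'M[R]_1).

Definition is_subgroup_Aff (n : nat) (G : 'M[R]_(n + 1) -> Prop) : Prop :=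
  (forall M, G M -> Aff M) /\
  G 1%:M /\
  (forall A B, G A -> G B -> G (A *m B)) /\
  (forall A, G A -> G (invmx A)).

Definition transitive_on_Rn (n : nat) (G : 'M[R]_(n + 1) -> Prop) : Prop :=
  forall x y : 'cV[R]_n, exists A, G A /\ A *m hom x = hom y.

Definition centraliser_Aff (n : nat) (G : 'M[R]_(n + 1) -> Prop)
  (M : 'M[R]_(n + 1)) : Prop :=
  Aff M /\ forall A, G A -> A *m M = M *m A.

Fixpoint mxpow (m : nat) (A : 'M[R]_m) (k : nat) : 'M[R]_m :=
  match k with
  | O => 1%:M
  | S k' => A *m mxpow A k'
  end.

Definition unipotent_mx (m : nat) (M : 'M[R]_m) : Prop :=
  exists k, mxpow (M - 1%:M) k = 0.

Definition mx_open (m : nat) (U : 'M[R]_m -> Prop) : Prop :=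
  forall M, U M -> exists eps : R, Rlt R0 eps /\
    forall N : 'M[R]_m, (forall i j, Rlt (Rabs (Rminus (N i j) (M i j))) eps) -> U N.

Definition mx_connected (m : nat) (S : 'M[R]_m -> Prop) : Prop :=
  ~ exists U V : 'M[R]_m -> Prop,
      mx_open U /\ mx_open V /\
      (forall M, S M -> U M \/ V M) /\
      (forall M, S M -> U M -> V M -> False) /\
      (exists M, S M /\ U M) /\ (exists M, S M /\ V M).

Definition mx_exp_is (m : nat) (X E : 'M[R]_m) : Prop :=
  forall i j, Un_cv (fun N => sum_f_R0 (fun k => Rdiv (mxpow X k i j) (INR (factorial k))) N)
                    (E i j).

Definition lie_algebra (m : nat) (H : 'M[R]_m -> Prop) (X : 'M[R]_m) : Prop :=
  forall (t : R) (E : 'M[R]_m), mx_exp_is (t *: X) E -> H E.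

(* dim H <= d: every linearly independent family in Lie(H) has at most d elements.
   (The dimension of a Lie group is the real dimension of its Lie algebra.) *)
Definition lie_dim_le (m : nat) (H : 'M[R]_m -> Prop) (d : nat) : Prop :=
  forall (k : nat) (X : 'I_k -> 'M[R]_m),
    (forall i, lie_algebra H (X i)) ->
    (forall c : 'I_k -> R, \sum_(i < k) c i *: X i = 0 -> forall i, c i = 0) ->
    (k <= d)%N.

(* Main.v *)
Require Import Defs.
From HB Require Import structures.
From Stdlib Require Import Reals Lra Lia Psatz Classical.
From mathcomp Require Import all_boot all_order all_algebra.
Set Implicit Arguments. Unset Strict Implicit. Unset Printing Implicit Defensive.
Import GRing.Theory.
Local Open Scope ring_scope.

Lemma addE (x y : R) : x + y = Rplus x y. Proof. reflexivity. Qed.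
Lemma mulE (x y : R) : x * y = Rmult x y. Proof. reflexivity. Qed.
Lemma oppE (x : R) : - x = Ropp x. Proof. reflexivity. Qed.
Lemma subE (x y : R) : x - y = Rminus x y. Proof. reflexivity. Qed.
Lemma zeroE : (0 : R) = R0. Proof. reflexivity. Qed.
Lemma oneE : (1 : R) = R1. Proof. reflexivity. Qed.

Lemma fin_bound (T : finType) (f : T -> R) : exists b, Rle 0 b /\ forall t, Rle (f t) b.
Proof.
suff H : forall l : seq T, exists b, Rle 0 b /\ forall t, t \in l -> Rle (f t) b.
  have [b [b0 Hb]] := H (enum T); exists b; split => // t; apply: Hb; by rewrite mem_enum.
elim=> [|x l [b [b0 Hb]]]; first by exists R0; split => //; apply: Rle_refl.
exists (Rmax (f x) b); split; first by apply: Rle_trans (Rmax_r _ _).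
move=> t; rewrite in_cons => /orP [/eqP -> | Ht]; first exact: Rmax_l.
apply: Rle_trans (Rmax_r _ _); exact: Hb.
Qed.

Lemma star_aux m (S : 'M[R]_m -> Prop) (O M : 'M[R]_m) (U V : 'M[R]_m -> Prop) :
  (forall s, Rle 0 s -> Rle s 1 -> S (O + s *: (M - O))) ->
  mx_open U -> mx_open V -> (forall X, S X -> U X \/ V X) ->
  (forall X, S X -> U X -> V X -> False) -> U O -> V M -> False.
Proof.
move=> HS oU oV cov disj UO VM.
set D := M - O.
set g := fun s : R => O + s *: D.
have [b [b0 Hb]] := fin_bound (fun p : 'I_m * 'I_m => Rabs (D p.1 p.2)).
have Hg r s i j : Rle (Rabs (Rminus (g r i j) (g s i j))) (Rmult (Rabs (Rminus r s)) b).
  have -> : Rminus (g r i j) (g s i j) = Rmult (Rminus r s) (D i j).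
    rewrite /g !mxE !addE !mulE; ring.
  rewrite Rabs_mult; apply: Rmult_le_compat_l; first exact: Rabs_pos.
  exact: (Hb (i, j)).
have g0 : g R0 = O by rewrite /g scale0r addr0.
have g1 : g R1 = M by rewrite /g scale1r addrC subrK.
have nbh (W : 'M[R]_m -> Prop) s : mx_open W -> W (g s) ->
    exists d, Rlt 0 d /\ forall r, Rlt (Rabs (Rminus r s)) d -> W (g r).
  move=> oW Ws; have [e [e0 He]] := oW _ Ws.
  exists (Rdiv e (Rplus b 1)); split; first by apply: Rdiv_lt_0_compat; lra.
  move=> r Hr; apply: He => i j; apply: Rle_lt_trans (Hg r s i j) _.
  have Hb1 : Rlt 0 (Rplus b 1) by lra.
  apply: Rle_lt_trans (_ : Rle _ (Rmult (Rabs (Rminus r s)) (Rplus b 1))) _.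
    apply: Rmult_le_compat_l; [exact: Rabs_pos | lra].
  have -> : e = Rmult (Rdiv e (Rplus b 1)) (Rplus b 1) by field; lra.
  by apply: Rmult_lt_compat_r.
pose E := fun s => Rle 0 s /\ Rle s 1 /\ forall r, Rle 0 r -> Rle r s -> U (g r).
have E0 : E R0.
  split; first lra; split; first lra.
  move=> r r0 r1; have -> : r = R0 by lra.
  by rewrite g0.
have [s Hs] : {s | is_lub E s}.
  apply: completeness; last by exists R0.
  by exists R1 => x [_ [Hx _]].
have s0 : Rle 0 s by apply: (proj1 Hs).
have s1 : Rle s 1 by apply: (proj2 Hs) => x [_ [Hx _]].
have Sgs : S (g s) by apply: HS.
have ex_above x : Rlt x s -> exists e, E e /\ Rlt x e.
  move=> xs; apply: NNPP => H.
  have : Rle s x.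
    apply: (proj2 Hs) => e Ee; apply: Rnot_lt_le => ex; apply: H; by exists e.
  lra.
case: (cov _ Sgs) => [Ugs | Vgs].
- have [d [d0 Hd]] := nbh U s oU Ugs.
  pose s' := Rmin (Rplus s (Rdiv d 2)) 1.
  have Es' : E s'.
    split; first by apply: Rmin_glb; [lra|lra].
    split; first exact: Rmin_r.
    move=> r r0 rs'.
    case: (Rlt_le_dec r s) => rs.
      have [e [[_ [_ He]] re]] := ex_above r rs; apply: He => //; lra.
    apply: Hd; have := Rmin_l (Rplus s (Rdiv d 2)) 1; rewrite -/s' => ?.
    rewrite Rabs_right; lra.
  have Hs's : Rle s' s by apply: (proj1 Hs).
  have s'1 : s' = R1.
    rewrite /s' in Hs's *; move: Hs's; rewrite /Rmin; case: Rle_dec => //; lra.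
  apply: (disj M); [by rewrite -g1; apply: HS; lra| |by []].
  by rewrite -g1; move: Es' => [_ [_ H]]; apply: H; lra.
- have [d [d0 Hd]] := nbh V s oV Vgs.
  have [e [[e0 [e1 He]] se]] := ex_above (Rminus s d) ltac:(lra).
  have es : Rle e s by apply: (proj1 Hs).
  apply: (disj (g e)); first by apply: HS.
    by apply: He; lra.
  by apply: Hd; rewrite Rabs_left1; lra.
Qed.

Lemma star_connected m (S : 'M[R]_m -> Prop) (O : 'M[R]_m) :
  S O -> (forall M, S M -> forall s, Rle 0 s -> Rle s 1 -> S (O + s *: (M - O))) ->
  mx_connected S.
Proof.
move=> SO HS [U [V [oU [oV [cov [disj [[M1 [SM1 UM1]] [M2 [SM2 VM2]]]]]]]]].
case: (cov _ SO) => HO.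
  exact: (star_aux (HS _ SM2) oU oV cov disj HO VM2).
apply: (star_aux (HS _ SM1) oV oU) => //.
- by move=> X SX; case: (cov X SX); [right|left].
- by move=> X SX UX VX; exact: (disj X SX VX UX).
Qed.

Lemma mxpowS_r m (A : 'M[R]_m) k : mxpow A k.+1 = mxpow A k *m A.
Proof.
elim: k => [|k IH]; first by rewrite /= mulmx1 mul1mx.
have -> : mxpow A k.+2 = A *m mxpow A k.+1 by [].
by rewrite {1}IH mulmxA.
Qed.

Lemma mxpow_comm m (A B : 'M[R]_m) k : A *m B = B *m A -> A *m mxpow B k = mxpow B k *m A.
Proof.
move=> H; elim: k => [|k IH] /=; first by rewrite mulmx1 mul1mx.
by rewrite mulmxA H -mulmxA IH mulmxA.
Qed.

Lemma col_eq0 m n (B : 'M[R]_(m,n)) : (forall z : 'cV[R]_n, B *m z = 0) -> B = 0.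
Proof.
move=> H; apply/matrixP=> i j.
have := congr1 (fun Z : 'cV[R]_m => Z i 0) (H (delta_mx j 0)).
by rewrite -colE !mxE.
Qed.

Lemma hom_span n (B : 'M[R]_(n+1)) : (forall y, B *m Defs.hom y = 0) -> B = 0.
Proof.
move=> H; apply: col_eq0 => z.
have -> : z = Defs.hom (usubmx z) - Defs.hom 0 + (dsubmx z 0 0) *: Defs.hom 0.
  rewrite /Defs.hom scale_col_mx opp_col_mx !add_col_mx scaler0 subr0 addr0 subrr add0r.
  by rewrite scalemx1 -mx11_scalar vsubmxK.
by rewrite !mulmxDr mulmxN -scalemxAr !H subrr scaler0 addr0.
Qed.

Lemma kill n (G : 'M[R]_(n+1) -> Prop) (B : 'M[R]_(n+1)) x0 :
  transitive_on_Rn G -> (forall A, G A -> A *m B = B *m A) -> B *m Defs.hom x0 = 0 -> B = 0.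
Proof.
move=> Ht Hc Hx; apply: hom_span => y.
have [A [GA HA]] := Ht x0 y.
by rewrite -HA mulmxA -Hc // -mulmxA Hx mulmx0.
Qed.

Lemma Aff_dsub n (M : 'M[R]_(n+1)) : Aff M -> dsubmx (M - 1%:M) = 0.
Proof.
case=> g [t [_ ->]].
by rewrite (scalar_mx_block n 1 (1:R)) opp_block_mx add_block_mx block_mxEv col_mxKd !subrr row_mx0.
Qed.

Lemma dsub_mul m1 m2 n p (A : 'M[R]_(m1 + m2, n)) (B : 'M[R]_(n, p)) :
  dsubmx (A *m B) = dsubmx A *m B.
Proof. by rewrite -{1}[A]vsubmxK mul_col_mx col_mxKd. Qed.

Lemma exists_stab m (N : 'M[R]_m) : exists j, ((mxpow N j)^T <= (mxpow N j.+1)^T)%MS.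
Proof.
apply: NNPP => Hn.
have Hs j : ((mxpow N j.+1)^T <= (mxpow N j)^T)%MS by rewrite mxpowS_r trmx_mul submxMl.
have Hlt j : (\rank (mxpow N j.+1)^T < \rank (mxpow N j)^T)%N.
  rewrite (ltn_leqif (mxrank_leqif_sup (Hs j))); apply/negP => H; apply: Hn; by exists j.
have Hb j : (\rank (mxpow N j)^T + j <= m)%N.
  elim: j => [|j IH]; first by rewrite addn0 rank_leq_col.
  by rewrite addnS; apply: leq_trans IH; rewrite ltn_add2r.
by have := Hb m.+1; rewrite addnS ltnNge leq_addl.
Qed.

Lemma unip n (G : 'M[R]_(n+1) -> Prop) M : transitive_on_Rn G -> centraliser_Aff G M ->
  exists j, mxpow (M - 1%:M) j = 0.
Proof.
move=> Ht [HA Hc].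
set N := M - 1%:M.
have HcN A : G A -> A *m N = N *m A by move=> GA; rewrite /N mulmxBr mulmxBl Hc // mulmx1 mul1mx.
have HdN : dsubmx N = 0 := Aff_dsub HA.
have [j Hj] := exists_stab N.
exists j.
set e := Defs.hom (0 : 'cV[R]_n).
have : ((e^T *m (mxpow N j)^T) <= (mxpow N j.+1)^T)%MS by apply: submx_trans Hj; exact: submxMl.
case/submxP => D HD.
have HD' : mxpow N j *m e = mxpow N j.+1 *m D^T.
  by apply: trmx_inj; rewrite [LHS]trmx_mul [RHS]trmx_mul trmxK HD.
set v := e - N *m D^T.
have Hv : mxpow N j *m v = 0.
  by rewrite /v mulmxBr HD' mxpowS_r mulmxA subrr.
have Hvd : v = Defs.hom (usubmx v).
  rewrite /Defs.hom -[v in LHS]vsubmxK; congr col_mx.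
  by rewrite /v linearB /= dsub_mul HdN mul0mx subr0 /e /Defs.hom col_mxKd.
apply: (kill (x0 := usubmx v) Ht) => [A GA|]; first exact: mxpow_comm (HcN A GA).
by rewrite -Hvd.
Qed.

Fixpoint invs m (N : 'M[R]_m) (s : R) (k : nat) : 'M[R]_m :=
  match k with
  | O => 0
  | k'.+1 => invs N s k' + ((- s) ^+ k') *: mxpow N k'
  end.

Lemma invsP m (N : 'M[R]_m) s k :
  (1%:M + s *: N) *m invs N s k = 1%:M - ((- s) ^+ k) *: mxpow N k.
Proof.
elim: k => [|k IH] /=; first by rewrite mulmx0 expr0 scale1r subrr.
rewrite mulmxDr IH scalemxAr mulmxDl mul1mx -scalemxAl -!scalemxAr scalerA addrA subrK.
by rewrite exprS mulNr scaleNr opprK mulrC.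
Qed.

Lemma seg_unit m (N : 'M[R]_m) s j : mxpow N j = 0 -> (1%:M + s *: N) \in unitmx.
Proof.
move=> Hj; have := invsP N s j; rewrite Hj scaler0 subr0.
by case/mulmx1_unit.
Qed.

Lemma seg_Aff n (N : 'M[R]_(n+1)) s j : mxpow N j = 0 -> dsubmx N = 0 ->
  Aff (1%:M + s *: N).
Proof.
move=> Hj Hd; set P := 1%:M + s *: N.
have HdP : dsubmx P = row_mx 0 1%:M.
  by rewrite /P linearD linearZ /= Hd scaler0 addr0 (scalar_mx_block n 1 (1:R)) block_mxEv col_mxKd.
have HP : P = block_mx (ulsubmx P) (ursubmx P) 0 1%:M.
  by rewrite -{1}[P]submxK /dlsubmx /drsubmx HdP row_mxKl row_mxKr.
exists (ulsubmx P), (ursubmx P); split => //.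
have := seg_unit s Hj; rewrite -/P !unitmxE HP det_ublock det1 mulr1.
by rewrite block_mxKul.
Qed.

Lemma seg_C n (G : 'M[R]_(n+1) -> Prop) M s : transitive_on_Rn G -> centraliser_Aff G M ->
  centraliser_Aff G (1%:M + s *: (M - 1%:M)).
Proof.
move=> Ht HM; have [j Hj] := unip Ht HM.
case: HM => HA Hc; split; first exact: (seg_Aff s Hj (Aff_dsub HA)).
move=> A GA; rewrite mulmxDr mulmxDl mulmx1 mul1mx -scalemxAr -scalemxAl; congr (_ + _ *: _).
by rewrite mulmxBr mulmxBl Hc // mulmx1 mul1mx.
Qed.


Section RealLemmas.
Local Open Scope R_scope.

Lemma small_zero (x K : R) : (forall t, 0 < t <= 1 -> Rabs (t * x) <= K * t ^ 2) -> x = 0.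
Proof.
move=> H; apply: NNPP => hx.
have ax : 0 < Rabs x by apply: Rabs_pos_lt.
set t := Rmin 1 (Rabs x / (2 * (Rabs K + 1))).
have hK : 0 < Rabs K + 1 by have := Rabs_pos K; lra.
have t0 : 0 < t.
  apply: Rmin_glb_lt; first lra.
  apply: Rdiv_lt_0_compat; lra.
have t1 : t <= 1 by apply: Rmin_l.
have t2 : t <= Rabs x / (2 * (Rabs K + 1)) by apply: Rmin_r.
have := H t (conj t0 t1); rewrite Rabs_mult (Rabs_right t); last lra.
move=> Hle.
have Hx : Rabs x <= K * t.
  apply: (Rmult_le_reg_l t) => //; nra.
have : K * t <= (Rabs K + 1) * t.
  apply: Rmult_le_compat_r; first lra; have := Rle_abs K; lra.
have : (Rabs K + 1) * t <= Rabs x / 2.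
  have -> : Rabs x / 2 = (Rabs K + 1) * (Rabs x / (2 * (Rabs K + 1))) by field; lra.
  apply: Rmult_le_compat_l; lra.
lra.
Qed.

Lemma lim_le (u : nat -> R) l c D : Un_cv u l ->
  (forall N, (1 <= N)%coq_nat -> Rabs (u N - c) <= D) -> Rabs (l - c) <= D.
Proof.
move=> Hu HD; apply: Rnot_lt_le => Hlt.
have [N0 HN0] := Hu (Rabs (l - c) - D) ltac:(lra).
have := HN0 (Nat.max N0 1) (Nat.le_max_l _ _); rewrite /Rdist => H1.
have := HD (Nat.max N0 1) (Nat.le_max_r _ _) => H2.
have := Rabs_triang (l - u (Nat.max N0 1)) (u (Nat.max N0 1) - c).
rewrite Rabs_minus_sym in H1.
have -> : l - u (Nat.max N0 1) + (u (Nat.max N0 1) - c) = l - c by ring.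
lra.
Qed.

Lemma exp_cv x : Un_cv (fun N => sum_f_R0 (fun k => / INR (Factorial.fact k) * x ^ k) N) (exp x).
Proof. rewrite /exp; case: (exist_exp x) => l Hl /=; exact: Hl. Qed.

Lemma abs_conv (a : nat -> R) x : (forall k, Rabs (a k) <= / INR (Factorial.fact k) * x ^ k) ->
  {l | Un_cv (fun N => sum_f_R0 a N) l}.
Proof.
move=> H; apply: cv_cauchy_2; apply: cauchy_abs; apply: cv_cauchy_1.
apply: (Rseries_CV_comp _ (fun k => / INR (Factorial.fact k) * x ^ k)).
  move=> k; split; [exact: Rabs_pos | exact: H].
by exists (exp x); apply: exp_cv.
Qed.


Lemma pow_le1 t k : 0 <= t <= 1 -> 0 <= t ^ k <= 1.
Proof. move=> Ht; elim: k => [|k IH] /=; nra. Qed.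

Lemma pow_le2 t k : 0 <= t <= 1 -> (2 <= k)%coq_nat -> t ^ k <= t ^ 2.
Proof.
move=> Ht; case: k => [|[|k]] Hk; try lia.
have := pow_le1 k Ht; rewrite /=; nra.
Qed.

Lemma sum_shift2 (a : nat -> R) N : (1 <= N)%coq_nat ->
  sum_f_R0 a N - (a 0%nat + a 1%nat) =
  sum_f_R0 (fun k => match k with 0%nat | 1%nat => 0 | _ => a k end) N.
Proof.
elim: N => [|N IH] HN; first lia.
case: N IH HN => [|N] IH HN; first by rewrite /=; ring.
have E1 (f : nat -> R) : sum_f_R0 f N.+2 = sum_f_R0 f N.+1 + f N.+2 by [].
rewrite !E1 -IH; [ring | lia].
Qed.

Lemma tail_bound (a : nat -> R) t B : 0 < t <= 1 -> 0 <= B ->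
  (forall k, Rabs (a k) <= t ^ k * (/ INR (Factorial.fact k) * B ^ k)) ->
  forall N, (1 <= N)%coq_nat -> Rabs (sum_f_R0 a N - (a 0%nat + a 1%nat)) <= exp B * t ^ 2.
Proof.
move=> Ht HB Ha N HN; rewrite sum_shift2 //.
apply: Rle_trans (sum_f_R0_triangle _ _) _.
have Hc k : 0 <= / INR (Factorial.fact k) * B ^ k.
  apply: Rmult_le_pos; [apply: Rlt_le; apply: Rinv_0_lt_compat; apply: INR_fact_lt_0 | exact: pow_le].
apply: Rle_trans (_ : _ <= sum_f_R0 (fun k => / INR (Factorial.fact k) * B ^ k * t ^ 2) N) _.
  apply: sum_Rle => k _.
  case: k => [|[|k]]; try (rewrite Rabs_R0; apply: Rmult_le_pos => //; apply: pow_le; lra).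
  apply: Rle_trans (Ha _) _; rewrite Rmult_comm; apply: Rmult_le_compat_l => //.
  apply: pow_le2; lia || lra.
rewrite -scal_sum [X in _ <= X]Rmult_comm; apply: Rmult_le_compat_l; first by apply: pow_le; lra.
apply: sum_incr => //; exact: exp_cv.
Qed.

End RealLemmas.

Lemma powE (t : R) k : t ^+ k = pow t k.
Proof. by elim: k => [|k IH] //; rewrite exprS IH. Qed.

Lemma natmulE (c : R) m : @eq R (c *+ m) (Rmult (INR m) c).
Proof.
elim: m => [|m IH]; first by rewrite mulr0n /= Rmult_0_l.
by rewrite mulrS IH S_INR addE Rmult_plus_distr_r Rmult_1_l Rplus_comm.
Qed.

Lemma factE k : factorial k = Factorial.fact k.
Proof. by elim: k => // k IH; rewrite factS IH. Qed.

Lemma mxpowZ m (X : 'M[R]_m) t k : mxpow (t *: X) k = (t ^+ k) *: mxpow X k.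
Proof.
elim: k => [|k IH] /=; first by rewrite scale1r.
by rewrite IH -scalemxAl -scalemxAr scalerA -exprS.
Qed.

Lemma Rabs_sum_le (I : finType) (F G : I -> R) :
  (forall i, Rle (Rabs (F i)) (G i)) -> Rle (Rabs (\sum_i F i)) (\sum_i G i).
Proof.
move=> H; apply: (big_ind2 (fun a b => Rle (Rabs a) b)) => //.
  by rewrite Rabs_R0; apply: Rle_refl.
move=> a b c d H1 H2; apply: Rle_trans (Rabs_triang a c) _.
exact: Rplus_le_compat.
Qed.

Lemma mxpow_bound m (X : 'M[R]_m) b : Rle 0 b -> (forall i j, Rle (Rabs (X i j)) b) ->
  forall k i j, Rle (Rabs (mxpow X k i j)) (pow (Rmult (INR m) b) k).
Proof.
move=> b0 Hb; elim=> [|k IH] i j /=.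
  rewrite mxE; case: (i == j) => /=; [rewrite oneE Rabs_R1 | rewrite ?mulr0n Rabs_R0]; lra.
rewrite mxE.
apply: Rle_trans (Rabs_sum_le (G := fun _ => Rmult b (pow (Rmult (INR m) b) k)) _) _.
  move=> l; rewrite mulE Rabs_mult; apply: Rmult_le_compat; try exact: Rabs_pos; [exact: Hb | exact: IH].
rewrite sumr_const card_ord natmulE; apply: Req_le; ring.
Qed.

Lemma exp_bound m (X : 'M[R]_m) : exists K : R,
  forall t : R, Rlt 0 t -> Rle t 1 -> exists E : 'M[R]_m, mx_exp_is (t *: X) E /\
    forall i j, Rle (Rabs (Rminus (Rminus (E i j) ((1%:M : 'M[R]_m) i j)) (Rmult t (X i j))))
                    (Rmult K (pow t 2)).
Proof.
have [b [b0 Hb]] := fin_bound (fun p : 'I_m * 'I_m => Rabs (X p.1 p.2)).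
set B := Rmult (INR m) b.
have B0 : Rle 0 B by apply: Rmult_le_pos => //; apply: pos_INR.
exists (exp B) => t t0 t1.
pose a i j k := Rdiv (mxpow (t *: X) k i j) (INR (factorial k)).
have Ha i j k : Rle (Rabs (a i j k))
    (Rmult (pow t k) (Rmult (Rinv (INR (Factorial.fact k))) (pow B k))).
  have HP := mxpow_bound b0 (fun i j => Hb (i, j)) k i j.
  have Hf : Rlt 0 (Rinv (INR (Factorial.fact k))) by apply: Rinv_0_lt_compat; apply: INR_fact_lt_0.
  have Ht : Rle 0 (pow t k) by apply: pow_le; lra.
  rewrite /a mxpowZ mxE factE /Rdiv Rabs_mult mulE Rabs_mult powE.
  rewrite (Rabs_right (pow t k)); last lra.
  rewrite (Rabs_right (Rinv _)); last lra.
  rewrite Rmult_assoc; apply: Rmult_le_compat_l => //.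
  rewrite Rmult_comm; apply: Rmult_le_compat_l; [lra | exact: HP].
have Ha' i j k : Rle (Rabs (a i j k)) (Rmult (Rinv (INR (Factorial.fact k))) (pow B k)).
  apply: Rle_trans (Ha i j k) _.
  have := pow_le1 k (conj (Rlt_le _ _ t0) t1).
  have : Rle 0 (Rmult (Rinv (INR (Factorial.fact k))) (pow B k)).
    apply: Rmult_le_pos; [apply: Rlt_le; apply: Rinv_0_lt_compat; apply: INR_fact_lt_0 | exact: pow_le].
  nra.
exists (\matrix_(i, j) proj1_sig (abs_conv (Ha' i j))); split.
  by move=> i j; rewrite mxE; case: (abs_conv (Ha' i j)) => l Hl /=.
move=> i j; rewrite mxE; case: (abs_conv (Ha' i j)) => l Hl /=.
have H := lim_le Hl (tail_bound (conj t0 t1) B0 (Ha i j)).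
have a0 : a i j 0%N = (1%:M : 'M[R]_m) i j by rewrite /a /= /Rdiv Rinv_1 Rmult_1_r.
have a1 : a i j 1%N = Rmult t (X i j).
  by rewrite /a /= mulmx1 mxE /Rdiv Rinv_1 Rmult_1_r.
rewrite a0 a1 in H.
have -> : Rminus (Rminus l ((1%:M : 'M[R]_m) i j)) (Rmult t (X i j)) =
          Rminus l (Rplus ((1%:M : 'M[R]_m) i j) (Rmult t (X i j))) by ring.
exact: H.
Qed.

Lemma entry_sub m1 m2 (A B : 'M[R]_(m1, m2)) i j : (A - B) i j = Rminus (A i j) (B i j).
Proof. by rewrite !mxE. Qed.

Lemma entryR m (E X : 'M[R]_m) t i l :
  (E - 1%:M - t *: X) i l = Rminus (Rminus (E i l) ((1%:M : 'M[R]_m) i l)) (Rmult t (X i l)).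
Proof. by rewrite !mxE. Qed.

Lemma prod_bound m (A B : 'M[R]_m) c i j : (forall i j, Rle (Rabs (B i j)) c) ->
  Rle (Rabs ((A *m B) i j)) (Rmult c (\sum_l Rabs (A i l))).
Proof.
move=> H; rewrite mxE -mulE mulr_sumr; apply: Rabs_sum_le => l.
rewrite !mulE Rabs_mult [X in Rle _ X]Rmult_comm; apply: Rmult_le_compat_l; [exact: Rabs_pos | exact: H].
Qed.

Lemma prod_bound' m (A B : 'M[R]_m) c i j : (forall i j, Rle (Rabs (A i j)) c) ->
  Rle (Rabs ((A *m B) i j)) (Rmult c (\sum_l Rabs (B l j))).
Proof.
move=> H; rewrite mxE -mulE mulr_sumr; apply: Rabs_sum_le => l.
rewrite !mulE Rabs_mult; apply: Rmult_le_compat_r; [exact: Rabs_pos | exact: H].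
Qed.

Lemma lie_S n (G : 'M[R]_(n+1) -> Prop) X : lie_algebra (centraliser_Aff G) X ->
  dsubmx X = 0 /\ forall A, G A -> A *m X = X *m A.
Proof.
move=> HX; have [K HK] := exp_bound X.
split.
  apply/matrixP => k j; rewrite [RHS]mxE mxE.
  apply: (small_zero (K := K)) => t [t0 t1].
  have [E [HE HB]] := HK t t0 t1.
  have [HA _] := HX t E HE.
  have := congr1 (fun Z : 'M[R]_(1, n+1) => Z k j) (Aff_dsub HA).
  rewrite [in X in X -> _]mxE [X in _ = X -> _]mxE entry_sub => H0.
  have := HB (rshift n k) j.
  rewrite H0.
  by rewrite Rminus_0_l Rabs_Ropp.
move=> A GA; apply/eqP; rewrite -subr_eq0; apply/eqP/matrixP => i j.
rewrite [RHS]mxE.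
apply: (small_zero (K := Rmult K (Rplus (\sum_l Rabs (A l j)) (\sum_l Rabs (A i l))))) => t [t0 t1].
have [E [HE HB]] := HK t t0 t1.
have [_ HC] := HX t E HE.
set Rm := E - 1%:M - t *: X.
have HR : forall i j, Rle (Rabs (Rm i j)) (Rmult K (pow t 2)) by move=> i' j'; rewrite entryR; exact: HB.
have Heq : t *: (A *m X - X *m A) = Rm *m A - A *m Rm.
  rewrite /Rm !mulmxBr !mulmxBl (HC A GA) mulmx1 mul1mx -!scalemxAl -!scalemxAr scalerBr.
  set P := E *m A - A.
  by rewrite opprB [RHS]addrC [RHS]addrA subrK.
have := congr1 (fun Z : 'M[R]_(n+1) => Z i j) Heq; rewrite [in X in X -> _]mxE mulE => ->.
rewrite entry_sub /Rminus.
apply: Rle_trans (Rabs_triang _ _) _; rewrite Rabs_Ropp.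
have H1 := @prod_bound' _ Rm A _ i j HR.
have H2 := @prod_bound _ A Rm _ i j HR.
have -> : Rmult (Rmult K (Rplus (\sum_l Rabs (A l j)) (\sum_l Rabs (A i l)))) (pow t 2) =
  Rplus (Rmult (Rmult K (pow t 2)) (\sum_l Rabs (A l j))) (Rmult (Rmult K (pow t 2)) (\sum_l Rabs (A i l))) by ring.
exact: Rplus_le_compat.
Qed.

Lemma lie_dim n (G : 'M[R]_(n+1) -> Prop) : transitive_on_Rn G ->
  lie_dim_le (centraliser_Aff G) n.
Proof.
move=> Ht k X HX Hind.
have HS i := lie_S (HX i).
pose phi (Y : 'M[R]_(n+1)) : 'rV[R]_n := (usubmx (Y *m Defs.hom 0))^T.
pose V : 'M[R]_(k, n) := \matrix_(i, j) phi (X i) 0 j.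
have HrowV i : row i V = phi (X i) by apply/rowP => j; rewrite !mxE.
suff : row_free V by move/eqP <-; exact: rank_leq_col.
rewrite -kermx_eq0; apply/eqP/row_matrixP => r; rewrite row0.
set u := row r (kermx V).
have Hu : u *m V = 0 by rewrite /u -row_mul mulmx_ker row0.
pose Y := \sum_(i < k) u 0 i *: X i.
suff HY : Y = 0 by apply/rowP => i; rewrite [RHS]mxE; exact: (Hind _ HY i).
apply: (kill (x0 := 0) Ht).
  move=> A GA; rewrite /Y mulmx_sumr mulmx_suml; apply: eq_bigr => i _.
  by rewrite -scalemxAr -scalemxAl (proj2 (HS i) A GA).
have HdY : dsubmx Y = 0.
  rewrite /Y linear_sum /=; apply: big1 => i _; by rewrite linearZ /= (proj1 (HS i)) scaler0.
have HuY : phi Y = 0.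
  rewrite -Hu mulmx_sum_row /Y /phi mulmx_suml !linear_sum /=; apply: eq_bigr => i _.
  by rewrite HrowV /phi -scalemxAl !linearZ.
rewrite -[Y *m _]vsubmxK dsub_mul HdY mul0mx.
have -> : usubmx (Y *m Defs.hom 0) = 0 by rewrite -[LHS]trmxK -/(phi Y) HuY trmx0.
by rewrite col_mx0.
Qed.

Theorem mainTheorem19 (n : nat) (G : 'M[R]_(n + 1) -> Prop) :
  is_subgroup_Aff G -> transitive_on_Rn G ->
  [/\ mx_connected (centraliser_Aff G),
      (forall M, centraliser_Aff G M -> unipotent_mx M) &
      lie_dim_le (centraliser_Aff G) n].
Proof.
move=> Hsub Ht; split.
- apply: (star_connected (O := 1%:M)).
    split; last by move=> A _; rewrite mulmx1 mul1mx.
    exists 1%:M, 0; split; first exact: unitmx1.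
    exact: (scalar_mx_block n 1 (1:R)).
  by move=> M HM s _ _; exact: seg_C Ht HM.
- by move=> M HM; exact: unip Ht HM.
- exact: lie_dim Ht.
Qed.
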